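(* Let $\mathcal L_0$ be a sufficiently large constant such that for every $\mathcal L\ge\mathcal L_0$ the number of primes in $[\sqrt{\mathcal L},\sqrt{2\mathcal L}]$ exceeds $\frac{\sqrt{\mathcal L}}{2\log\mathcal L}$. Then for any $\mathcal L\ge\mathcal L_0$, any $M,N>0$ and any real $t$, $$S^\flat(M,N,t)\ll\frac{\log\mathcal L}{\sqrt{\mathcal L}}\left(S(M\mathcal L,N,t)+S(2M\mathcal L,N,t)+\sum_{\substack{\sqrt{\mathcal L}\le p\le\sqrt{2\mathcal L}\\ p\text{ prime}}}\frac{S^\flat(M,N/p,t)}{p^2}\right),$$ where the implied constant is absolute (in particular independent of $\mathcal L$).
   Context: For a nonzero integer $m$, $\chi_m(n)=\left(\frac mn\right)$ denotes the Kronecker symbol. $G$ is a fixed smooth non-negative function supported in $[3/4,2]$ such that for every integer $J\ge0$, $G(x)+G(x/2)+\dots+G(x/2^J)$ equals $1$ on $[1,3\cdot2^{J-1}]$ and is supported on $[3/4,2^{J+1}]$. Define $$S(M,N,t)=\sum_{\substack{M\le|m|<2M\\ m\text{ not a perfect square}}}\left|\sum_{n\ge1}\frac{\chi_m(n)}{n^{\frac12+it}}G\!\left(\frac nN\right)\right|^4,\qquad S^\flat(M,N,t)=\sum_{\substack{M\le|m|<2M\\ m\text{ fundamental discriminant}}}\left|\sum_{n\ge1}\frac{\chi_m(n)}{n^{\frac12+it}}G\!\left(\frac nN\right)\right|^4.$$ *)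

(* Defs.v *)
From Stdlib Require Import Reals ZArith Znumtheory List Lia Lra.
From Stdlib Require Import ClassicalDescription.
From Coquelicot Require Import Coquelicot.
Open Scope R_scope.

Definition ind (P : Prop) (x : R) : R :=
  if excluded_middle_informative P then x else 0.

Definition kron_prime (m : Z) (p : Z) : Z :=
  if Z.eqb p 2 then
    (if Z.eqb (Z.modulo m 2) 0 then 0%Z
     else if orb (Z.eqb (Z.modulo m 8) 1) (Z.eqb (Z.modulo m 8) 7) then 1%Z
     else (-1)%Z)
  else
    (let r := Z.modulo m p in
     if Z.eqb r 0 then 0%Z
     else if Z.eqb (Z.modulo (r ^ ((p - 1) / 2)) p) 1 then 1%Z else (-1)%Z).

Definition pval (p : Z) (n : nat) : nat :=
  List.length (List.filter
    (fun k => Z.eqb (Z.modulo (Z.of_nat n) (p ^ Z.of_nat k)) 0)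
    (List.seq 1 n)).

Definition kron (m : Z) (n : nat) : Z :=
  List.fold_right Z.mul 1%Z
    (List.map (fun q =>
       let p := Z.of_nat q in
       if prime_dec p then ((kron_prime m p) ^ Z.of_nat (pval p n))%Z else 1%Z)
     (List.seq 2 (n - 1))).

Definition perfect_square (m : Z) : Prop := exists k : Z, m = (k * k)%Z.

Definition Zsquarefree (m : Z) : Prop :=
  forall d : Z, Z.divide (d * d) m -> (d * d = 1)%Z.

(* fundamental discriminant = discriminant of a quadratic field (1 excluded) *)
Definition fund_disc (m : Z) : Prop :=
  m <> 1%Z /\
  ((Z.modulo m 4 = 1%Z /\ Zsquarefree m) \/
   (Z.modulo m 4 = 0%Z /\
    (Z.modulo (m / 4) 4 = 2%Z \/ Z.modulo (m / 4) 4 = 3%Z) /\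
    Zsquarefree (m / 4))).

Definition smooth (f : R -> R) : Prop :=
  forall (k : nat) (x : R), ex_derive_n f k x.

Definition admissible_G (G : R -> R) : Prop :=
  smooth G /\
  (forall x, 0 <= G x) /\
  (forall x, G x <> 0 -> 3/4 <= x <= 2) /\
  (forall (J : nat) (x : R),
     1 <= x <= 3 * 2 ^ J / 2 ->
     sum_n (fun j => G (x / 2 ^ j)) J = 1) /\
  (forall (J : nat) (x : R),
     sum_n (fun j => G (x / 2 ^ j)) J <> 0 -> 3/4 <= x <= 2 ^ (S J)).

Definition sumZ (a b : Z) (f : Z -> R) : R :=
  List.fold_right Rplus 0
    (List.map (fun k => f (a + Z.of_nat k)%Z)
       (List.seq 0 (Z.to_nat (b - a + 1)))).

(* n^{-(1/2 + i t)} for n >= 1 *)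
Definition npow_s (n : nat) (t : R) : C :=
  ( / sqrt (INR n) * cos (t * ln (INR n)),
   - (/ sqrt (INR n) * sin (t * ln (INR n))) ).

(* sum_{n >= 1} chi_m(n) n^{-1/2-it} G(n/N).  Since G is supported in
   [3/4,2], only n <= 2N contribute; we sum n = 1 .. up(2N)+1 which
   contains all of them. *)
Definition char_sum (G : R -> R) (m : Z) (N t : R) : C :=
  sum_n (fun k =>
     Cmult (RtoC (IZR (kron m (S k)) * G (INR (S k) / N))) (npow_s (S k) t))
    (Z.to_nat (up (2 * N))).

Definition S_all (G : R -> R) (M N t : R) : R :=
  sumZ (- up (2 * M)) (up (2 * M)) (fun m =>
    ind (M <= IZR (Z.abs m) < 2 * M /\ ~ perfect_square m)
        (Cmod (char_sum G m N t) ^ 4)).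

Definition S_flat (G : R -> R) (M N t : R) : R :=
  sumZ (- up (2 * M)) (up (2 * M)) (fun m =>
    ind (M <= IZR (Z.abs m) < 2 * M /\ fund_disc m)
        (Cmod (char_sum G m N t) ^ 4)).

Definition prime_sum (L : R) (f : R -> R) : R :=
  sumZ 0 (up (sqrt (2 * L))) (fun p =>
    ind (prime p /\ sqrt L <= IZR p <= sqrt (2 * L)) (f (IZR p))).

Definition prime_count (L : R) : R := prime_sum L (fun _ => 1).

(* Main.v *)
Require Import Defs.
From Stdlib Require Import Reals.
From Coquelicot Require Import Coquelicot.
Open Scope R_scope.

From Stdlib Require Import ZArith Znumtheory Zpow_facts List Lia Lra Psatz.
From Stdlib Require FinFun Classical_Prop ClassicalDescription.

Module FB.
From mathcomp Require Import ssreflect ssrbool ssrfun eqtype ssrnat div prime binomial.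
Lemma expn_pow (a n : nat) : expn a n = Nat.pow a n.
Proof. elim: n => [|n IH] //. by rewrite expnS IH. Qed.
Lemma modn_mod (a d : nat) : (0 < d)%N -> modn a d = Nat.modulo a d.
Proof. move=> Hd. apply: (Nat.mod_unique a d (divn a d)).
  - apply/ltP. by rewrite ltn_pmod.
  - rewrite {1}(divn_eq a d). rewrite -multE -plusE. lia.
Qed.
Lemma prime_bridge (p : nat) : Znumtheory.prime (Z.of_nat p) -> prime p.
Proof.
move=> Hp. apply/primeP. split.
- apply/ltP. have := prime_ge_2 _ Hp. lia.
- move=> d /dvdnP [k Hk]. 
  have Hd : Z.divide (Z.of_nat d) (Z.of_nat p).
  { exists (Z.of_nat k). rewrite Hk -multE. lia. }
  have := prime_divisors _ Hp _ Hd. move=> H.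
  have H2 := prime_ge_2 _ Hp.
  apply/orP. case: H => [H|[H|[H|H]]]; [lia| left; apply/eqP; lia | right; apply/eqP; lia | lia].
Qed.
Lemma fermat_nat (a p : nat) : Znumtheory.prime (Z.of_nat p) -> Nat.modulo (Nat.pow a p) p = Nat.modulo a p.
Proof.
move=> Hp. have Hp' := prime_bridge _ Hp. have H := fermat_little a Hp'.
have Hg : (0 < p)%N by apply: prime_gt0.
rewrite -!modn_mod // -expn_pow. exact H.
Qed.
End FB.


Open Scope Z_scope.

Lemma fermat_Z (q a : Z) : prime q -> ~ (q | a) -> (a ^ (q - 1)) mod q = 1.
Proof.
  intros Hq Ha. pose proof (prime_ge_2 _ Hq) as Hq2.
  pose proof (Z.mod_pos_bound a q ltac:(lia)) as Hb.
  set (r := a mod q) in *.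
  assert (Hr : ~ (q | r)).
  { intros [k Hk]. apply Ha. exists (a / q + k). pose proof (Z.div_mod a q ltac:(lia)). fold r in H. lia. }
  pose proof (FB.fermat_nat (Z.to_nat r) (Z.to_nat q)) as HF.
  rewrite Z2Nat.id in HF by lia. specialize (HF Hq).
  apply (f_equal Z.of_nat) in HF. rewrite !Nat2Z.inj_mod, Nat2Z.inj_pow, !Z2Nat.id in HF by lia.
  assert (Hd : (q | r * (r ^ (q - 1) - 1))).
  { apply Z.mod_divide; [lia|].
    replace (r * (r ^ (q - 1) - 1)) with (r ^ q - r).
    - rewrite Zminus_mod, HF, Z.sub_diag. reflexivity.
    - replace q with (Z.succ (q - 1)) at 1 by lia. rewrite Z.pow_succ_r by lia. ring. }
  apply Gauss in Hd; [| apply prime_rel_prime; auto].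
  rewrite <- Z.mod_pow_l. fold r.
  apply Z.mod_divide in Hd; [|lia].
  rewrite Zminus_mod in Hd.
  rewrite (Z.mod_small 1 q) in Hd by lia.
  pose proof (Z.mod_pos_bound (r ^ (q-1)) q ltac:(lia)).
  destruct (Z.eq_dec (r ^ (q - 1) mod q) 1) as [E|E]; auto.
  exfalso. apply Z.mod_divide in Hd; [|lia].
  set (x := r ^ (q - 1) mod q) in *.
  destruct (Z.eq_dec x 0) as [E0|E0].
  - rewrite E0 in Hd. apply Z.divide_opp_r in Hd. apply Z.divide_pos_le in Hd; lia.
  - apply Z.divide_pos_le in Hd; lia.
Qed.

Lemma prime_odd (p : Z) : prime p -> p <> 2 -> p mod 2 = 1.
Proof.
  intros Hp Hne. pose proof (prime_ge_2 _ Hp).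
  pose proof (Z.mod_pos_bound p 2 ltac:(lia)).
  destruct (Z.eq_dec (p mod 2) 0) as [E|E]; [|lia].
  exfalso. apply Z.mod_divide in E; [|lia].
  apply prime_div_prime in E; [lia| apply prime_2 | auto].
Qed.

Lemma sq_mod8 (p : Z) : p mod 2 = 1 -> (p * p) mod 8 = 1.
Proof.
  intros H.
  assert (p mod 8 = 1 \/ p mod 8 = 3 \/ p mod 8 = 5 \/ p mod 8 = 7).
  { pose proof (Z.div_mod p 8 ltac:(lia)). pose proof (Z.mod_pos_bound p 8 ltac:(lia)).
    pose proof (Z.div_mod p 2 ltac:(lia)). lia. }
  rewrite Z.mul_mod by lia.
  destruct H0 as [E|[E|[E|E]]]; rewrite E; reflexivity.
Qed.

Lemma kp_sq (m p q : Z) : prime p -> prime q -> q <> p ->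
  kron_prime (m * (p * p)) q = kron_prime m q.
Proof.
  intros Hp Hq Hne. pose proof (prime_ge_2 _ Hp). pose proof (prime_ge_2 _ Hq).
  unfold kron_prime. destruct (Z.eqb_spec q 2) as [E|E].
  - subst q. assert (Hpo := prime_odd p Hp (fun h => Hne (eq_sym h))).
    assert (H8 := sq_mod8 p Hpo).
    assert (E2 : (m * (p * p)) mod 2 = m mod 2).
    { rewrite Z.mul_mod by lia. replace ((p*p) mod 2) with 1.
      rewrite Z.mul_1_r, Z.mod_mod by lia. reflexivity.
      rewrite Z.mul_mod by lia. rewrite Hpo. reflexivity. }
    assert (E8 : (m * (p * p)) mod 8 = m mod 8).
    { rewrite Z.mul_mod, H8 by lia. rewrite Z.mul_1_r, Z.mod_mod by lia. reflexivity. }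
    rewrite E2, E8. reflexivity.
  - assert (Hqo := prime_odd q Hq E).
    assert (Hnd : ~ (q | p)).
    { intros Hd. apply prime_div_prime in Hd; auto. }
    assert (Hiff : (m * (p * p)) mod q = 0 <-> m mod q = 0).
    { rewrite !Z.mod_divide by lia. split.
      - intros Hd. apply prime_mult in Hd; auto. destruct Hd as [Hd|Hd]; auto.
        apply prime_mult in Hd; auto. destruct Hd; contradiction.
      - intros Hd. apply Z.divide_mul_l. auto. }
    cbv zeta.
    destruct (Z.eqb_spec (m mod q) 0) as [E1|E1].
    + rewrite (proj2 Hiff E1). reflexivity.
    + destruct (Z.eqb_spec ((m * (p * p)) mod q) 0) as [E2|E2].
      { exfalso. apply E1, Hiff, E2. }
      set (e := (q - 1) / 2).
      assert (He : q - 1 = 2 * e).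
      { unfold e. pose proof (Z.div_mod q 2 ltac:(lia)). pose proof (Z.div_mod (q-1) 2 ltac:(lia)).
        pose proof (Z.mod_pos_bound (q-1) 2 ltac:(lia)). lia. }
      assert (He0 : 0 <= e) by (unfold e; lia).
      assert (Hpw : ((m * (p * p)) mod q) ^ e mod q = (m mod q) ^ e mod q).
      { rewrite !Z.mod_pow_l. rewrite Z.pow_mul_l.
        replace ((p * p) ^ e) with (p ^ (q - 1)).
        - rewrite Z.mul_mod, fermat_Z by (auto; lia). rewrite Z.mul_1_r, Z.mod_mod by lia. reflexivity.
        - rewrite He, Z.pow_mul_r by lia. rewrite Z.pow_2_r. reflexivity. }
      rewrite Hpw. reflexivity.
Qed.

Lemma kp_sq_self (m p : Z) : prime p -> kron_prime (m * (p * p)) p = 0.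
Proof.
  intros Hp. pose proof (prime_ge_2 _ Hp).
  unfold kron_prime. destruct (Z.eqb_spec p 2) as [E|E].
  - subst p. replace (m * (2 * 2)) with ((m * 2) * 2) by ring. rewrite Z.mod_mul by lia. reflexivity.
  - cbv zeta. replace (m * (p * p)) with ((m * p) * p) by ring. rewrite Z.mod_mul by lia. reflexivity.
Qed.

Lemma kp_bound (m q : Z) : -1 <= kron_prime m q <= 1.
Proof.
  unfold kron_prime. repeat (cbv zeta; match goal with |- context [if ?b then _ else _] => destruct b end); lia.
Qed.


Definition Pk (p : Z) (n : nat) (k : nat) : bool :=
  Z.eqb (Z.modulo (Z.of_nat n) (p ^ Z.of_nat k)) 0.

Lemma pval_eq p n : pval p n = length (filter (Pk p n) (seq 1 n)).
Proof. reflexivity. Qed.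

Lemma Pk_iff p n k : 2 <= p -> (Pk p n k = true <-> (p ^ Z.of_nat k | Z.of_nat n)).
Proof.
  intros Hp. unfold Pk. rewrite Z.eqb_eq. apply Z.mod_divide.
  apply Z.pow_nonzero; lia.
Qed.

Lemma Pk_small p n k : 2 <= p -> (1 <= n)%nat -> Pk p n k = true -> (k < n)%nat.
Proof.
  intros Hp Hn H. apply Pk_iff in H; auto.
  apply Z.divide_pos_le in H; [|lia].
  pose proof (Z.pow_gt_lin_r p (Z.of_nat k) ltac:(lia) ltac:(lia)). lia.
Qed.

Lemma filter_nil_all {A} (f : A -> bool) l :
  (forall x, In x l -> f x = false) -> filter f l = nil.
Proof.
  induction l as [|a l IH]; simpl; intros H; auto.
  rewrite H by auto. apply IH. intros; apply H; auto.
Qed.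

Lemma filter_seq_ext (f : nat -> bool) a L L' : (L <= L')%nat ->
  (forall k, (a + L <= k)%nat -> f k = false) ->
  length (filter f (seq a L')) = length (filter f (seq a L)).
Proof.
  intros HL Hf. replace L' with (L + (L' - L))%nat by lia.
  rewrite seq_app, filter_app, length_app.
  rewrite (filter_nil_all f (seq (a + L) (L' - L))). simpl; lia.
  intros x Hx. apply in_seq in Hx. apply Hf. lia.
Qed.

Lemma pval_ext p n B : 2 <= p -> (1 <= n)%nat -> (n <= B)%nat ->
  length (filter (Pk p n) (seq 1 B)) = pval p n.
Proof.
  intros Hp Hn HB. rewrite pval_eq. apply filter_seq_ext; auto.
  intros k Hk. destruct (Pk p n k) eqn:E; auto.
  apply Pk_small in E; auto. lia.
Qed.

Lemma pval_zero p n : 2 <= p -> (1 <= n)%nat -> ~ (p | Z.of_nat n) -> pval p n = 0%nat.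
Proof.
  intros Hp Hn Hd. rewrite pval_eq. rewrite filter_nil_all; auto.
  intros k Hk. apply in_seq in Hk. destruct (Pk p n k) eqn:E; auto.
  exfalso. apply Pk_iff in E; auto. apply Hd.
  eapply Z.divide_trans; [|exact E].
  replace (Z.of_nat k) with (Z.succ (Z.of_nat k - 1)) by lia.
  rewrite Z.pow_succ_r by lia. apply Z.divide_factor_l.
Qed.

Lemma pval_pos p n : 2 <= p -> (1 <= n)%nat -> (p | Z.of_nat n) -> (1 <= pval p n)%nat.
Proof.
  intros Hp Hn Hd. rewrite pval_eq.
  replace n with (S (n - 1)) at 2 by lia. simpl.
  replace (Pk p n 1) with true. simpl; lia.
  symmetry. apply Pk_iff; auto. rewrite Z.pow_1_r. auto.
Qed.

Lemma length_filter_map {A B} (f : B -> bool) (g : A -> B) l :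
  length (filter f (map g l)) = length (filter (fun x => f (g x)) l).
Proof.
  induction l as [|a l IH]; simpl; auto. destruct (f (g a)); simpl; auto.
Qed.

Lemma pval_mul_other (q : Z) (p n : nat) : prime q -> prime (Z.of_nat p) -> q <> Z.of_nat p ->
  (1 <= n)%nat -> pval q (p * n) = pval q n.
Proof.
  intros Hq Hp Hne Hn. pose proof (prime_ge_2 _ Hq). pose proof (prime_ge_2 _ Hp).
  rewrite (pval_eq q (p * n)).
  rewrite (filter_ext _ (Pk q n)).
  - apply pval_ext; auto; nia.
  - intros k. apply Bool.eq_true_iff_eq. rewrite !Pk_iff by auto.
    rewrite Nat2Z.inj_mul. split; intros Hx.
    + apply Gauss with (Z.of_nat p); auto.
      apply rel_prime_sym. apply rel_prime_Zpower_r; [lia|].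
      apply rel_prime_sym. apply prime_rel_prime; auto.
      intros Hd. apply prime_div_prime in Hd; auto.
    + apply Z.divide_mul_r. auto.
Qed.

Lemma pval_mul_self (p n : nat) : prime (Z.of_nat p) -> (1 <= n)%nat ->
  pval (Z.of_nat p) (p * n) = S (pval (Z.of_nat p) n).
Proof.
  intros Hp Hn. pose proof (prime_ge_2 _ Hp).
  rewrite (pval_eq _ (p * n)).
  replace (p * n)%nat with (S (p * n - 1)) at 2 by nia. simpl seq.
  simpl filter.
  replace (Pk (Z.of_nat p) (p * n) 1) with true.
  2:{ symmetry. apply Pk_iff; auto. rewrite Z.pow_1_r, Nat2Z.inj_mul. apply Z.divide_factor_l. }
  simpl length. f_equal.
  rewrite <- seq_shift, length_filter_map.
  rewrite (filter_ext _ (Pk (Z.of_nat p) n)).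
  - apply pval_ext; auto; nia.
  - intros k. apply Bool.eq_true_iff_eq. rewrite !Pk_iff by auto.
    rewrite Nat2Z.inj_mul, Nat2Z.inj_succ, Z.pow_succ_r by lia.
    apply Z.mul_divide_cancel_l. lia.
Qed.

Definition termq (m : Z) (n : nat) (q : nat) : Z :=
  if prime_dec (Z.of_nat q) then (kron_prime m (Z.of_nat q) ^ Z.of_nat (pval (Z.of_nat q) n))%Z else 1%Z.

Definition zprod (l : list Z) : Z := fold_right Z.mul 1 l.

Definition kronB (m : Z) (n : nat) (B : nat) : Z := zprod (map (termq m n) (seq 2 B)).

Lemma kron_eq m n : kron m n = kronB m n (n - 1).
Proof. reflexivity. Qed.

Lemma zprod_app l1 l2 : zprod (l1 ++ l2) = zprod l1 * zprod l2.
Proof. unfold zprod. induction l1 as [|a l1 IH]; cbn [fold_right app]; [ring|]. rewrite IH. ring. Qed.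

Lemma zprod_ones (f : nat -> Z) l : (forall x, In x l -> f x = 1) -> zprod (map f l) = 1.
Proof.
  unfold zprod in *. induction l as [|a l IH]; cbn [fold_right map In]; intros H; auto.
  rewrite H by auto. rewrite IH; [ring|]. intros; apply H; auto.
Qed.

Lemma zprod_zero (f : nat -> Z) l x : In x l -> f x = 0 -> zprod (map f l) = 0.
Proof.
  unfold zprod in *. induction l as [|a l IH]; cbn [fold_right map In]; intros Hx Hf; [contradiction|].
  destruct Hx as [<-|Hx]. rewrite Hf; ring. rewrite IH; auto. ring.
Qed.

Lemma zprod_mul (f g : nat -> Z) l : zprod (map (fun q => f q * g q) l) = zprod (map f l) * zprod (map g l).
Proof. unfold zprod. induction l as [|a l IH]; cbn [fold_right map]; auto. rewrite IH. ring. Qed.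

Lemma zprod_single (p : nat) (c : Z) l : NoDup l -> In p l ->
  zprod (map (fun q => if Nat.eqb q p then c else 1) l) = c.
Proof.
  induction l as [|a l IH]; cbn [In]; intros Hnd Hin; [contradiction|].
  inversion Hnd; subst. unfold zprod in *; cbn [fold_right map].
  destruct Hin as [<-|Hin].
  - rewrite Nat.eqb_refl. rewrite (zprod_ones (fun q => if Nat.eqb q a then c else 1)). ring.
    intros x Hx. destruct (Nat.eqb_spec x a); subst; [contradiction|auto].
  - destruct (Nat.eqb_spec a p); subst; [contradiction|]. rewrite IH; auto. ring.
Qed.

Lemma kronB_ext m n B : (1 <= n)%nat -> (n - 1 <= B)%nat -> kronB m n B = kronB m n (n - 1).
Proof.
  intros Hn HB. unfold kronB. replace B with ((n - 1) + (B - (n - 1)))%nat by lia.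
  rewrite seq_app, map_app, zprod_app. rewrite (zprod_ones _ (seq (2 + (n - 1)) _)). ring.
  intros q Hq. apply in_seq in Hq. unfold termq.
  destruct (prime_dec (Z.of_nat q)); auto.
  rewrite pval_zero; auto; try lia.
  intros Hd. apply Z.divide_pos_le in Hd; lia.
Qed.

Lemma nat_mod_div (p n : nat) : (1 < p)%nat -> (Nat.eqb (n mod p) 0 = true <-> (Z.of_nat p | Z.of_nat n)).
Proof.
  intros Hp. rewrite Nat.eqb_eq. rewrite <- Z.mod_divide by lia.
  rewrite <- Nat2Z.inj_mod. lia.
Qed.

Lemma kron_sq m (p n : nat) : prime (Z.of_nat p) -> (1 <= n)%nat ->
  kron (m * (Z.of_nat p * Z.of_nat p)) n = if Nat.eqb (n mod p) 0 then 0 else kron m n.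
Proof.
  intros Hp Hn. pose proof (prime_ge_2 _ Hp). rewrite !kron_eq. unfold kronB.
  destruct (Nat.eqb (n mod p) 0) eqn:E.
  - apply nat_mod_div in E; [|lia].
    apply (zprod_zero _ _ p).
    + apply in_seq. apply Z.divide_pos_le in E; lia.
    + unfold termq. destruct (prime_dec (Z.of_nat p)); [|contradiction].
      rewrite kp_sq_self by auto. apply Z.pow_0_l.
      pose proof (pval_pos (Z.of_nat p) n ltac:(lia) Hn E). lia.
  - f_equal. apply map_ext. intros q. unfold termq.
    destruct (prime_dec (Z.of_nat q)) as [Hq|Hq]; auto.
    destruct (Nat.eq_dec q p) as [->|Hne].
    + rewrite pval_zero; auto; try lia. intros Hd. apply (nat_mod_div p n) in Hd; [|lia]. congruence.
    + rewrite kp_sq; auto. lia.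
Qed.

Lemma kron_mul m (p n : nat) : prime (Z.of_nat p) -> (1 <= n)%nat ->
  kron m (p * n) = kron_prime m (Z.of_nat p) * kron m n.
Proof.
  intros Hp Hn. pose proof (prime_ge_2 _ Hp). rewrite !kron_eq.
  rewrite <- (kronB_ext m n (p * n - 1)) by nia.
  unfold kronB.
  rewrite (map_ext (termq m (p * n)) (fun q => termq m n q * (if Nat.eqb q p then kron_prime m (Z.of_nat p) else 1))).
  - rewrite zprod_mul, zprod_single. ring. apply seq_NoDup. apply in_seq. nia.
  - intros q. unfold termq. destruct (Nat.eqb_spec q p) as [->|Hne].
    + destruct (prime_dec (Z.of_nat p)); [|contradiction].
      rewrite pval_mul_self by auto. rewrite Nat2Z.inj_succ, Z.pow_succ_r by lia. ring.
    + destruct (prime_dec (Z.of_nat q)); [|ring].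
      rewrite pval_mul_other; try ring; auto; try lia.
Qed.


Close Scope Z_scope.
Open Scope R_scope.


Definition csum (l : list nat) (f : nat -> C) : C := fold_right Cplus (RtoC 0) (map f l).

Lemma csum_app l1 l2 f : csum (l1 ++ l2) f = Cplus (csum l1 f) (csum l2 f).
Proof. unfold csum. induction l1 as [|a l1 IH]; cbn [map fold_right app]. ring. rewrite IH; ring. Qed.

Lemma csum_ext l f g : (forall x, In x l -> f x = g x) -> csum l f = csum l g.
Proof. unfold csum. induction l as [|a l IH]; cbn [map fold_right In]; intros H; auto.
  rewrite H, IH; auto. Qed.

Lemma csum_plus l f g : csum l (fun x => Cplus (f x) (g x)) = Cplus (csum l f) (csum l g).
Proof. unfold csum. induction l as [|a l IH]; cbn [map fold_right]. ring. rewrite IH; ring. Qed.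

Lemma csum_scal l c f : csum l (fun x => Cmult c (f x)) = Cmult c (csum l f).
Proof. unfold csum. induction l as [|a l IH]; cbn [map fold_right]. ring. rewrite IH; ring. Qed.

Lemma csum_zero l f : (forall x, In x l -> f x = RtoC 0) -> csum l f = RtoC 0.
Proof. unfold csum. induction l as [|a l IH]; cbn [map fold_right In]; intros H; auto.
  rewrite H, IH; auto. ring. Qed.

Lemma csum_map l g f : csum (map g l) f = csum l (fun x => f (g x)).
Proof. unfold csum. rewrite map_map. reflexivity. Qed.

Lemma sum_n_csum (f : nat -> C) n : sum_n f n = csum (seq 0 (S n)) f.
Proof.
  induction n as [|n IH].
  - rewrite sum_O. unfold csum. simpl. ring.
  - rewrite sum_Sn, IH. rewrite (seq_S (S n)), csum_app. unfold csum at 3. simpl. 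
    change plus with Cplus. ring.
Qed.

Lemma csum_tail B1 B2 f : (B1 <= B2)%nat -> (forall n, (B1 < n)%nat -> f n = RtoC 0) ->
  csum (seq 1 B2) f = csum (seq 1 B1) f.
Proof.
  intros HB Hf. replace B2 with (B1 + (B2 - B1))%nat by lia.
  rewrite seq_app, csum_app, (csum_zero (seq (1 + B1) _)). ring.
  intros x Hx. apply in_seq in Hx. apply Hf. lia.
Qed.

Lemma csum_div (p : nat) (f : nat -> C) j : (1 <= p)%nat ->
  csum (seq 1 (p * j)) (fun n => if Nat.eqb (n mod p) 0 then f n else RtoC 0)
  = csum (seq 1 j) (fun n => f (p * n)%nat).
Proof.
  intros Hp. induction j as [|j IH].
  - rewrite Nat.mul_0_r. reflexivity.
  - replace (p * S j)%nat with (p * j + S (p - 1))%nat by lia.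
    rewrite seq_app, csum_app, IH. rewrite seq_S, csum_app.
    rewrite (seq_S j), csum_app. f_equal.
    rewrite csum_zero.
    + unfold csum. simpl.
      replace (S (p * j + (p - 1))) with (S j * p)%nat by lia.
      rewrite Nat.Div0.mod_mul. cbn [Nat.eqb]. rewrite (Nat.mul_comm (S j) p). ring.
    + intros x Hx. apply in_seq in Hx.
      destruct (Nat.eqb_spec (x mod p) 0) as [E|E]; auto.
      exfalso. pose proof (Nat.div_mod x p ltac:(lia)). rewrite E in H.
      set (q := (x / p)%nat) in *.
      destruct (le_lt_dec q j) as [Hq|Hq].
      * assert (p * q <= p * j)%nat by (apply Nat.mul_le_mono_l; lia). lia.
      * assert (p * S j <= p * q)%nat by (apply Nat.mul_le_mono_l; lia). lia.
Qed.

Definition cterm (G : R -> R) (m : Z) (N t : R) (n : nat) : C :=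
  Cmult (RtoC (IZR (kron m n) * G (INR n / N))) (npow_s n t).

Lemma char_sum_eq G m N t :
  char_sum G m N t = csum (seq 1 (S (Z.to_nat (up (2 * N))))) (cterm G m N t).
Proof.
  unfold char_sum. rewrite sum_n_csum. rewrite <- seq_shift, csum_map. reflexivity.
Qed.

Lemma G_zero G x : admissible_G G -> 2 < x -> G x = 0.
Proof.
  intros (_ & _ & HG & _) Hx. destruct (Req_dec (G x) 0); auto.
  apply HG in H. lra.
Qed.

Lemma up_nat_bound N n : 0 < N -> (Z.to_nat (up (2 * N)) < n)%nat -> 2 * N < INR n.
Proof.
  intros HN Hn. destruct (archimed (2 * N)) as [H1 H2].
  assert (Hu : (0 < up (2 * N))%Z) by (apply lt_IZR; lra).
  assert (IZR (up (2 * N)) < INR n).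
  { rewrite INR_IZR_INZ. apply IZR_lt. lia. }
  lra.
Qed.

Lemma cterm_vanish G m N t n : admissible_G G -> 0 < N ->
  (Z.to_nat (up (2 * N)) < n)%nat -> cterm G m N t n = RtoC 0.
Proof.
  intros HG HN Hn. unfold cterm. rewrite (G_zero G).
  - rewrite Rmult_0_r. ring.
  - auto.
  - apply up_nat_bound in Hn; auto. apply Rmult_lt_reg_r with N; auto.
    field_simplify; lra.
Qed.

Lemma npow_s_mul (p n : nat) t : (1 <= p)%nat -> (1 <= n)%nat ->
  npow_s (p * n) t = Cmult (npow_s p t) (npow_s n t).
Proof.
  intros Hp Hn. assert (0 < INR p) by (apply lt_0_INR; lia).
  assert (0 < INR n) by (apply lt_0_INR; lia).
  unfold npow_s, Cmult. simpl fst; simpl snd.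
  rewrite mult_INR, sqrt_mult, ln_mult by lra.
  assert (0 < sqrt (INR p)) by (apply sqrt_lt_R0; lra).
  assert (0 < sqrt (INR n)) by (apply sqrt_lt_R0; lra).
  rewrite Rmult_plus_distr_l, cos_plus, sin_plus.
  f_equal; field; lra.
Qed.

Lemma cterm_mul G m N t (p n : nat) : prime (Z.of_nat p) -> (1 <= n)%nat -> 0 < N ->
  cterm G m N t (p * n) =
  Cmult (RtoC (IZR (kron_prime m (Z.of_nat p)))) (Cmult (npow_s p t) (cterm G m (N / INR p) t n)).
Proof.
  intros Hp Hn HN. pose proof (prime_ge_2 _ Hp).
  assert (0 < INR p) by (apply lt_0_INR; lia).
  unfold cterm. rewrite kron_mul by auto. rewrite npow_s_mul by lia.
  rewrite mult_IZR.
  replace (INR (p * n) / N) with (INR n / (N / INR p)).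
  - rewrite !RtoC_mult. ring.
  - rewrite mult_INR. field. lra.
Qed.

Lemma cterm_split G m N t (p n : nat) : prime (Z.of_nat p) -> (1 <= n)%nat ->
  cterm G m N t n = Cplus (cterm G (m * (Z.of_nat p * Z.of_nat p)) N t n)
     (if Nat.eqb (n mod p) 0 then cterm G m N t n else RtoC 0).
Proof.
  intros Hp Hn. unfold cterm at 2. rewrite kron_sq by auto.
  destruct (Nat.eqb (n mod p) 0).
  - rewrite Rmult_0_l. ring.
  - fold (cterm G m N t n). ring.
Qed.

Lemma char_split G m N t (p : nat) : admissible_G G -> 0 < N -> prime (Z.of_nat p) ->
  char_sum G m N t = Cplus (char_sum G (m * (Z.of_nat p * Z.of_nat p)) N t)
    (Cmult (RtoC (IZR (kron_prime m (Z.of_nat p)))) (Cmult (npow_s p t) (char_sum G m (N / INR p) t))).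
Proof.
  intros HG HN Hp. pose proof (prime_ge_2 _ Hp).
  assert (0 < INR p) by (apply lt_0_INR; lia).
  rewrite !char_sum_eq.
  erewrite csum_ext; [| intros n Hn; apply in_seq in Hn; apply (cterm_split G m N t p n Hp); lia].
  rewrite csum_plus. f_equal.
  set (B := S (Z.to_nat (up (2 * N)))).
  set (B' := S (Z.to_nat (up (2 * (N / INR p))))).
  set (J := Nat.max B B').
  rewrite <- (csum_tail B (p * J)); [| unfold J; nia |].
  2:{ intros n Hn. destruct (Nat.eqb (n mod p) 0); auto. apply cterm_vanish; auto. unfold B in Hn; lia. }
  rewrite csum_div by lia.
  erewrite csum_ext; [| intros n Hn; apply in_seq in Hn; apply (cterm_mul G m N t p n Hp); [lia|lra]].
  rewrite !csum_scal. f_equal. f_equal.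
  apply csum_tail. unfold J; lia.
  intros n Hn. apply cterm_vanish; auto. apply Rdiv_lt_0_compat; lra. unfold B' in Hn; lia.
Qed.

Lemma Cmod_npow (p : nat) t : (1 <= p)%nat -> Cmod (npow_s p t) = / sqrt (INR p).
Proof.
  intros Hp. assert (0 < INR p) by (apply lt_0_INR; lia).
  assert (0 < sqrt (INR p)) by (apply sqrt_lt_R0; lra).
  unfold Cmod, npow_s. simpl fst; simpl snd.
  replace ((/ sqrt (INR p) * cos (t * ln (INR p))) ^ 2 + (- (/ sqrt (INR p) * sin (t * ln (INR p)))) ^ 2)
    with ((/ sqrt (INR p)) * (/ sqrt (INR p))).
  - rewrite sqrt_square; auto. left; apply Rinv_0_lt_compat; auto.
  - rewrite <- (Rmult_1_r (/ sqrt (INR p) * / sqrt (INR p))), <- (sin2_cos2 (t * ln (INR p))).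
    unfold Rsqr. ring.
Qed.

Lemma quartic (x y z w : R) : 0 <= x -> 0 <= y -> 0 <= z -> 0 <= w -> x <= y + w * z ->
  x ^ 4 <= 8 * (y ^ 4 + w ^ 4 * z ^ 4).
Proof.
  intros Hx Hy Hz Hw H. set (u := w * z) in *.
  assert (0 <= u) by (unfold u; nra).
  replace (w ^ 4 * z ^ 4) with (u ^ 4) by (unfold u; ring). clearbody u.
  assert (x ^ 4 <= (y + u) ^ 4).
  { apply pow_incr. split; [exact Hx| exact H]. }
  assert ((y + u) ^ 2 <= 2 * (y ^ 2 + u ^ 2)) by (pose proof (pow2_ge_0 (y - u)); nra).
  assert ((y ^ 2 + u ^ 2) ^ 2 <= 2 * (y ^ 4 + u ^ 4)) by (pose proof (pow2_ge_0 (y ^ 2 - u ^ 2)); nra).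
  assert ((y + u) ^ 4 = ((y + u) ^ 2) ^ 2) by ring.
  assert (((y + u) ^ 2) ^ 2 <= (2 * (y ^ 2 + u ^ 2)) ^ 2).
  { apply pow_incr. split; [apply pow2_ge_0|auto]. }
  assert ((2 * (y ^ 2 + u ^ 2)) ^ 2 = 4 * (y ^ 2 + u ^ 2) ^ 2) by ring.
  lra.
Qed.

Lemma char_bound G m N t (p : nat) : admissible_G G -> 0 < N -> prime (Z.of_nat p) ->
  Cmod (char_sum G m N t) ^ 4 <=
  8 * (Cmod (char_sum G (m * (Z.of_nat p * Z.of_nat p)) N t) ^ 4
       + Cmod (char_sum G m (N / INR p) t) ^ 4 / INR p ^ 2).
Proof.
  intros HG HN Hp. pose proof (prime_ge_2 _ Hp).
  assert (0 < INR p) by (apply lt_0_INR; lia).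
  assert (0 < sqrt (INR p)) by (apply sqrt_lt_R0; lra).
  set (w := / sqrt (INR p)).
  assert (Hw4 : w ^ 4 = / INR p ^ 2).
  { unfold w. rewrite pow_inv. f_equal.
    replace 4%nat with (2 * 2)%nat by reflexivity. rewrite pow_mult.
    rewrite pow2_sqrt by lra. reflexivity. }
  unfold Rdiv. rewrite Rmult_comm with (r1 := Cmod _ ^ 4), <- Hw4.
  apply quartic; try apply Cmod_ge_0.
  - left. apply Rinv_0_lt_compat; auto.
  - rewrite (char_split G m N t p) at 1 by auto.
    eapply Rle_trans; [apply Cmod_triangle|]. apply Rplus_le_compat_l.
    rewrite !Cmod_mult, Cmod_R, Cmod_npow by lia. fold w.
    pose proof (kp_bound m (Z.of_nat p)).
    assert (Rabs (IZR (kron_prime m (Z.of_nat p))) <= 1).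
    { pose proof (IZR_le _ _ (proj1 H2)). pose proof (IZR_le _ _ (proj2 H2)).
      apply Rabs_le. split; lra. }
    assert (0 <= w) by (left; apply Rinv_0_lt_compat; auto).
    pose proof (Cmod_ge_0 (char_sum G m (N / INR p) t)).
    pose proof (Rabs_pos (IZR (kron_prime m (Z.of_nat p)))).
    apply Rle_trans with (1 * (w * Cmod (char_sum G m (N / INR p) t))); [|lra].
    apply Rmult_le_compat_r; auto. apply Rmult_le_pos; auto.
Qed.

Open Scope Z_scope.

Lemma fd_cases m : fund_disc m ->
  m <> 1 /\ ((m mod 4 = 1 /\ Zsquarefree m) \/
   (m mod 4 = 0 /\ ((m / 4) mod 4 = 2 \/ (m / 4) mod 4 = 3) /\ Zsquarefree (m / 4))).
Proof. auto. Qed.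

Lemma rel_prime_sq_of a b : rel_prime a b -> rel_prime (a * a) (b * b).
Proof.
  intros H. apply rel_prime_sym. apply rel_prime_mult; apply rel_prime_sym;
  apply rel_prime_mult; auto.
Qed.

Lemma fd_no_odd_sq m q : fund_disc m -> prime q -> q <> 2 -> ~ (q * q | m).
Proof.
  intros Hm Hq Hq2 Hd. pose proof (prime_ge_2 _ Hq).
  destruct Hm as [Hm1 [[H4 Hsf] | [H4 [H4' Hsf]]]].
  - apply Hsf in Hd. nia.
  - assert (Hm : m = 4 * (m / 4)) by (pose proof (Z.div_mod m 4 ltac:(lia)); lia).
    rewrite Hm in Hd. apply Gauss in Hd.
    + apply Hsf in Hd. nia.
    + replace 4 with (2 * 2) by reflexivity. apply rel_prime_sq_of.
      apply prime_rel_prime; auto. intros Hd2. apply prime_div_prime in Hd2; auto. apply prime_2.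
Qed.

Lemma sq_mod16 k : (k * k) mod 16 = 0 \/ (k * k) mod 16 = 1 \/ (k * k) mod 16 = 4 \/ (k * k) mod 16 = 9.
Proof.
  rewrite Z.mul_mod by lia. pose proof (Z.mod_pos_bound k 16 ltac:(lia)).
  set (r := k mod 16) in *.
  assert (r = 0 \/ r = 1 \/ r = 2 \/ r = 3 \/ r = 4 \/ r = 5 \/ r = 6 \/ r = 7 \/ r = 8 \/ r = 9 \/
          r = 10 \/ r = 11 \/ r = 12 \/ r = 13 \/ r = 14 \/ r = 15) by lia.
  repeat (destruct H0 as [H0|H0]; [rewrite H0; cbv; tauto|]). rewrite H0; cbv; tauto.
Qed.

Lemma fd_not_square m : fund_disc m -> ~ perfect_square m.
Proof.
  intros Hm [k Hk].
  destruct Hm as [Hm1 [[H4 Hsf] | [H4 [H4' Hsf]]]].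
  - assert (Hd : (k * k | m)) by (exists 1; lia). apply Hsf in Hd. lia.
  - assert (m mod 16 = 8 \/ m mod 16 = 12).
    { pose proof (Z.div_mod m 4 ltac:(lia)). pose proof (Z.div_mod (m / 4) 4 ltac:(lia)).
      pose proof (Z.div_mod m 16 ltac:(lia)). pose proof (Z.mod_pos_bound m 16 ltac:(lia)). lia. }
    pose proof (sq_mod16 k). rewrite <- Hk in H0. lia.
Qed.

Lemma ns_mul m p : fund_disc m -> prime p -> ~ perfect_square (m * (p * p)).
Proof.
  intros Hm Hp [k Hk]. pose proof (prime_ge_2 _ Hp).
  assert (Hd : (p | k * k)) by (exists (m * p); lia).
  assert (Hpk : (p | k)) by (apply prime_mult in Hd; tauto).
  destruct Hpk as [j Hj]. subst k.
  apply (fd_not_square m Hm). exists j.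
  apply Z.mul_reg_r with (p * p); [nia|]. lia.
Qed.

Lemma fd_inj m1 m2 p1 p2 : fund_disc m1 -> fund_disc m2 -> prime p1 -> prime p2 ->
  m1 * (p1 * p1) = m2 * (p2 * p2) -> m1 = m2 /\ p1 = p2.
Proof.
  intros H1 H2 Hp1 Hp2 E. pose proof (prime_ge_2 _ Hp1). pose proof (prime_ge_2 _ Hp2).
  destruct (Z.eq_dec p1 p2) as [->|Hne].
  - split; auto. apply Z.mul_reg_r with (p2 * p2); [nia|]. lia.
  - exfalso.
    assert (Hr : rel_prime (p1 * p1) (p2 * p2)).
    { apply rel_prime_sq_of. apply prime_rel_prime; auto. intros Hd.
      apply prime_div_prime in Hd; auto. }
    assert (Hd1 : (p1 * p1 | m2)).
    { apply Gauss with (p2 * p2); auto. exists m1. lia. }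
    assert (Hd2 : (p2 * p2 | m1)).
    { apply Gauss with (p1 * p1); [exists m2; lia | apply rel_prime_sym; auto]. }
    destruct (Z.eq_dec p1 2) as [->|Hn1].
    + apply (fd_no_odd_sq m1 p2); auto.
    + apply (fd_no_odd_sq m2 p1); auto.
Qed.

Close Scope Z_scope.

Definition lsum {A} (l : list A) (f : A -> R) : R := fold_right Rplus 0 (map f l).

Lemma lsum_app {A} (l1 l2 : list A) f : lsum (l1 ++ l2) f = lsum l1 f + lsum l2 f.
Proof. unfold lsum. induction l1 as [|a l1 IH]; cbn [map fold_right app]. ring. rewrite IH; ring. Qed.

Lemma lsum_plus {A} (l : list A) f g : lsum l (fun x => f x + g x) = lsum l f + lsum l g.
Proof. unfold lsum. induction l as [|a l IH]; cbn [map fold_right]. ring. rewrite IH; ring. Qed.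

Lemma lsum_scal {A} (l : list A) c f : lsum l (fun x => c * f x) = c * lsum l f.
Proof. unfold lsum. induction l as [|a l IH]; cbn [map fold_right]. ring. rewrite IH; ring. Qed.

Lemma lsum_ext {A} (l : list A) f g : (forall x, In x l -> f x = g x) -> lsum l f = lsum l g.
Proof. unfold lsum. induction l as [|a l IH]; cbn [map fold_right In]; intros H; auto.
  rewrite H, IH; auto. Qed.

Lemma lsum_le {A} (l : list A) f g : (forall x, In x l -> f x <= g x) -> lsum l f <= lsum l g.
Proof. unfold lsum. induction l as [|a l IH]; cbn [map fold_right In]; intros H. lra.
  apply Rplus_le_compat; auto. Qed.

Lemma lsum_nonneg {A} (l : list A) f : (forall x, In x l -> 0 <= f x) -> 0 <= lsum l f.
Proof. unfold lsum. induction l as [|a l IH]; cbn [map fold_right In]; intros H. lra.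
  apply Rplus_le_le_0_compat; auto. Qed.

Lemma lsum_zero_fn {A} (l : list A) : lsum l (fun _ => 0) = 0.
Proof. unfold lsum. induction l; simpl; auto. rewrite IHl; ring. Qed.

Lemma lsum_cons {A} (a : A) l f : lsum (a :: l) f = f a + lsum l f.
Proof. reflexivity. Qed.

Lemma lsum_swap {A B} (l1 : list A) (l2 : list B) (g : A -> B -> R) :
  lsum l1 (fun a => lsum l2 (fun b => g a b)) = lsum l2 (fun b => lsum l1 (fun a => g a b)).
Proof.
  induction l1 as [|a l1 IH].
  - rewrite (lsum_ext l2 _ (fun _ => 0)) by reflexivity. rewrite lsum_zero_fn. reflexivity.
  - rewrite lsum_cons, IH, <- lsum_plus. apply lsum_ext. intros b _. reflexivity.
Qed.

Lemma lsum_prod {A B} (l1 : list A) (l2 : list B) (g : A -> B -> R) :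
  lsum l1 (fun a => lsum l2 (fun b => g a b)) = lsum (list_prod l1 l2) (fun x => g (fst x) (snd x)).
Proof.
  induction l1 as [|a l1 IH]; simpl.
  - reflexivity.
  - rewrite lsum_app. unfold lsum at 1. cbn [map fold_right].
    fold (lsum l1 (fun a => lsum l2 (fun b => g a b))). rewrite IH. f_equal.
    unfold lsum. rewrite map_map. reflexivity.
Qed.

Lemma NoDup_list_prod {A B} (l1 : list A) (l2 : list B) : NoDup l1 -> NoDup l2 -> NoDup (list_prod l1 l2).
Proof.
  intros H1 H2. induction H1 as [|a l1 Ha Hl1 IH]; simpl; [constructor|].
  apply NoDup_app; auto.
  - apply FinFun.Injective_map_NoDup; auto. intros x y E. inversion E; auto.
  - intros [x y] Hx Hy. apply in_map_iff in Hx. destruct Hx as [z [Ez _]]. inversion Ez; subst.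
    apply in_prod_iff in Hy. tauto.
Qed.

Lemma lsum_inj_le {A B} (l : list A) (l' : list B) (P : A -> Prop) (h : A -> R) (F : B -> R) (phi : A -> B) :
  NoDup l -> NoDup l' ->
  (forall x, In x l -> ~ P x -> h x = 0) ->
  (forall x, In x l -> P x -> h x <= F (phi x)) ->
  (forall x y, In x l -> In y l -> P x -> P y -> phi x = phi y -> x = y) ->
  (forall x, In x l -> P x -> In (phi x) l') ->
  (forall y, In y l' -> 0 <= F y) ->
  lsum l h <= lsum l' F.
Proof.
  intros Hnd. revert l'. induction Hnd as [|a l Ha Hl IH]; intros l' Hnd' H0 Hle Hinj Hin Hpos.
  - unfold lsum at 1. simpl. apply lsum_nonneg; auto.
  - unfold lsum at 1. cbn [map fold_right]. fold (lsum l h).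
    destruct (Classical_Prop.classic (P a)) as [Pa|Pa].
    + assert (Hia : In (phi a) l') by (apply Hin; simpl; auto).
      apply in_split in Hia. destruct Hia as [l1 [l2 El]]. subst l'.
      rewrite lsum_app. unfold lsum at 3. cbn [map fold_right]. fold (lsum l2 F).
      assert (lsum l h <= lsum (l1 ++ l2) F).
      { apply IH.
        - eapply NoDup_remove_1; eauto.
        - intros; apply H0; simpl; auto.
        - intros; apply Hle; simpl; auto.
        - intros; apply Hinj; simpl; auto.
        - intros x Hx Px. assert (Hx' := Hin x (or_intror Hx) Px).
          apply in_app_or in Hx'. apply in_or_app. destruct Hx' as [Hx'|[Hx'|Hx']]; auto.
          exfalso. assert (x = a) by (apply Hinj; simpl; auto). subst; contradiction.
        - intros y Hy. apply Hpos. apply in_app_or in Hy. apply in_or_app. simpl. tauto. }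
      rewrite lsum_app in H. assert (h a <= F (phi a)) by (apply Hle; simpl; auto). lra.
    + rewrite H0 by (simpl; auto). rewrite Rplus_0_l. apply IH; auto;
        intros; [apply H0 | apply Hle | apply Hinj | apply Hin]; simpl; auto.
Qed.

Definition zr (a b : Z) : list Z := map (fun k => (a + Z.of_nat k)%Z) (seq 0 (Z.to_nat (b - a + 1))).

Lemma sumZ_lsum a b f : sumZ a b f = lsum (zr a b) f.
Proof. unfold sumZ, lsum, zr. rewrite map_map. reflexivity. Qed.

Lemma In_zr a b x : In x (zr a b) <-> (a <= x <= b)%Z.
Proof.
  unfold zr. rewrite in_map_iff. split.
  - intros [k [Ek Hk]]. apply in_seq in Hk. lia.
  - intros Hx. exists (Z.to_nat (x - a)). split; [lia|]. apply in_seq. lia.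
Qed.

Lemma NoDup_zr a b : NoDup (zr a b).
Proof.
  unfold zr. apply FinFun.Injective_map_NoDup; [|apply seq_NoDup].
  intros x y E. lia.
Qed.

Lemma ind_mul P x : Defs.ind P x = Defs.ind P 1 * x.
Proof. unfold Defs.ind. destruct (ClassicalDescription.excluded_middle_informative P); ring. Qed.

Lemma ind_true (P : Prop) x : P -> Defs.ind P x = x.
Proof. unfold Defs.ind. destruct (ClassicalDescription.excluded_middle_informative P); tauto. Qed.

Lemma ind_false (P : Prop) x : ~ P -> Defs.ind P x = 0.
Proof. unfold Defs.ind. destruct (ClassicalDescription.excluded_middle_informative P); tauto. Qed.

Lemma ind_nonneg P x : 0 <= x -> 0 <= Defs.ind P x.
Proof. unfold Defs.ind. destruct (ClassicalDescription.excluded_middle_informative P); lra. Qed.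


Definition cmP (M : R) (m : Z) : Prop := M <= IZR (Z.abs m) < 2 * M /\ fund_disc m.
Definition cpP (L : R) (p : Z) : Prop := prime p /\ sqrt L <= IZR p <= sqrt (2 * L).
Definition FF (G : R -> R) (N t : R) (m : Z) : R := Cmod (char_sum G m N t) ^ 4.

Lemma Rinv_nonneg x : 0 <= x -> 0 <= / x.
Proof.
  intros H. destruct (Req_dec x 0) as [->|H0]. rewrite Rinv_0; lra.
  left; apply Rinv_0_lt_compat; lra.
Qed.

Lemma FF_nonneg G N t m : 0 <= FF G N t m.
Proof. unfold FF. apply pow_le, Cmod_ge_0. Qed.

Lemma prime_count_1 : prime_count 1 = 0.
Proof.
  unfold prime_count, prime_sum. rewrite sumZ_lsum.
  rewrite (lsum_ext _ _ (fun _ => 0)). apply lsum_zero_fn.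
  intros p _. apply ind_false. intros [Hp [_ H2]].
  pose proof (prime_ge_2 _ Hp) as H. apply IZR_le in H.
  assert (sqrt (2 * 1) < 2).
  { rewrite Rmult_1_r. pose proof (sqrt_sqrt 2 ltac:(lra)). pose proof (sqrt_pos 2).
    destruct (Rlt_or_le (sqrt 2) 2) as [Hl|Hl]; auto.
    assert (2 * 2 <= sqrt 2 * sqrt 2) by (apply Rmult_le_compat; lra). lra. }
  lra.
Qed.

Lemma sq_bounds L q : 0 < L -> 0 <= q -> sqrt L <= q <= sqrt (2 * L) -> L <= q * q <= 2 * L.
Proof.
  intros HL Hq [H1 H2]. pose proof (sqrt_pos L). pose proof (sqrt_pos (2 * L)).
  rewrite <- (sqrt_sqrt L) at 1 by lra. rewrite <- (sqrt_sqrt (2 * L)) by lra.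
  split; apply Rmult_le_compat; lra.
Qed.

Lemma pointwise G M N t L (m p : Z) : admissible_G G -> 0 < N ->
  Defs.ind (cmP M m) (FF G N t m) * Defs.ind (cpP L p) 1 <=
  8 * (Defs.ind (cmP M m /\ cpP L p) (FF G N t (m * (p * p))%Z) +
       Defs.ind (cpP L p) (Defs.ind (cmP M m) (FF G (N / IZR p) t m) / IZR p ^ 2)).
Proof.
  intros HG HN.
  match goal with |- _ <= ?r => assert (Hr : 0 <= r) end.
  { apply Rmult_le_pos; [lra|]. apply Rplus_le_le_0_compat; apply ind_nonneg; [apply FF_nonneg|].
    unfold Rdiv; apply Rmult_le_pos; [apply ind_nonneg, FF_nonneg | apply Rinv_nonneg, pow2_ge_0]. }
  destruct (Classical_Prop.classic (cmP M m)) as [Hm|Hm];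
  destruct (Classical_Prop.classic (cpP L p)) as [Hp|Hp].
  - rewrite !ind_true by tauto. rewrite Rmult_1_r.
    destruct Hp as [Hpr _]. pose proof (prime_ge_2 _ Hpr).
    set (pn := Z.to_nat p).
    assert (Ep : Z.of_nat pn = p) by (unfold pn; lia).
    assert (EI : INR pn = IZR p) by (rewrite INR_IZR_INZ, Ep; reflexivity).
    pose proof (char_bound G m N t pn HG HN ltac:(rewrite Ep; auto)) as Hb.
    rewrite Ep, EI in Hb. unfold FF. exact Hb.
  - rewrite (ind_false (cpP L p)) by auto. rewrite Rmult_0_r. apply Hr.
  - rewrite (ind_false (cmP M m)) by auto. rewrite Rmult_0_l. apply Hr.
  - rewrite (ind_false (cmP M m)) by auto. rewrite Rmult_0_l. apply Hr.
Qed.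


Lemma range_lemma M L m p : 0 < M -> 0 < L -> cmP M m -> cpP L p ->
  M * L <= IZR (Z.abs (m * (p * p))) < 2 * (2 * M * L).
Proof.
  intros HM HL [[Hm1 Hm2] _] [Hp Hq]. pose proof (prime_ge_2 _ Hp).
  assert (Hq0 : 0 <= IZR p) by (apply IZR_le; lia).
  pose proof (sq_bounds L (IZR p) HL Hq0 Hq) as [H1 H2].
  rewrite Z.abs_mul, (Z.abs_eq (p * p)) by nia. rewrite !mult_IZR.
  set (A := IZR (Z.abs m)) in *. set (q := IZR p) in *.
  split.
  - apply Rmult_le_compat; lra.
  - apply Rle_lt_trans with (A * (2 * L)).
    + apply Rmult_le_compat_l; lra.
    + replace (2 * (2 * M * L)) with ((2 * M) * (2 * L)) by ring.
      apply Rmult_lt_compat_r; lra.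
Qed.

Lemma In_zr_abs (x : Z) (B : R) : IZR (Z.abs x) < B -> In x (zr (- up B)%Z (up B)).
Proof.
  intros H. destruct (archimed B) as [H1 _]. apply In_zr.
  assert (Z.abs x < up B)%Z by (apply lt_IZR; lra). lia.
Qed.

Lemma T1_bound G M N t L : 0 < M -> 0 < L ->
  lsum (zr (- up (2 * M))%Z (up (2 * M))) (fun m => lsum (zr 0 (up (sqrt (2 * L))))
     (fun p => Defs.ind (cmP M m /\ cpP L p) (FF G N t (m * (p * p))%Z)))
  <= S_all G (M * L) N t + S_all G (2 * M * L) N t.
Proof.
  intros HM HL.
  rewrite (lsum_prod _ _ (fun m p => Defs.ind (cmP M m /\ cpP L p) (FF G N t (m * (p * p))%Z))).
  set (c1 := fun m : Z => M * L <= IZR (Z.abs m) < 2 * (M * L) /\ ~ perfect_square m).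
  set (c2 := fun m : Z => 2 * M * L <= IZR (Z.abs m) < 2 * (2 * M * L) /\ ~ perfect_square m).
  apply Rle_trans with (lsum (zr (- up (2 * (2 * M * L)))%Z (up (2 * (2 * M * L))))
     (fun m => Defs.ind (c1 m) (FF G N t m) + Defs.ind (c2 m) (FF G N t m))).
  - apply lsum_inj_le with (P := fun x => cmP M (fst x) /\ cpP L (snd x))
                           (phi := fun x => (fst x * (snd x * snd x))%Z).
    + apply NoDup_list_prod; apply NoDup_zr.
    + apply NoDup_zr.
    + intros x _ Hx. apply ind_false; auto.
    + intros [m p] _ [Hm Hp]. simpl. rewrite ind_true by auto.
      pose proof (range_lemma M L m p HM HL Hm Hp) as [R1 R2].
      assert (Hns : ~ perfect_square (m * (p * p))) by (apply ns_mul; [apply Hm | apply Hp]).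
      pose proof (ind_nonneg (c1 (m * (p * p))%Z) _ (FF_nonneg G N t (m * (p * p))%Z)).
      pose proof (ind_nonneg (c2 (m * (p * p))%Z) _ (FF_nonneg G N t (m * (p * p))%Z)).
      destruct (Rlt_le_dec (IZR (Z.abs (m * (p * p)))) (2 * (M * L))) as [Hl|Hl].
      * rewrite (ind_true (c1 _)) by (unfold c1; split; [lra|auto]). lra.
      * rewrite (ind_true (c2 _)) by (unfold c2; split; [lra|auto]). lra.
    + intros [m1 p1] [m2 p2] _ _ [Hm1 Hp1] [Hm2 Hp2] E. simpl in *.
      destruct (fd_inj m1 m2 p1 p2 (proj2 Hm1) (proj2 Hm2) (proj1 Hp1) (proj1 Hp2) E). subst; reflexivity.
    + intros [m p] _ [Hm Hp]. simpl. apply In_zr_abs.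
      apply (range_lemma M L m p HM HL Hm Hp).
    + intros y _. apply Rplus_le_le_0_compat; apply ind_nonneg, FF_nonneg.
  - rewrite lsum_plus. apply Rplus_le_compat.
    + unfold S_all. rewrite sumZ_lsum.
      apply lsum_inj_le with (P := c1) (phi := fun x => x).
      * apply NoDup_zr.
      * apply NoDup_zr.
      * intros x _ Hx. apply ind_false; auto.
      * intros x _ Hx. right. reflexivity.
      * auto.
      * intros x _ Hx. apply In_zr_abs. destruct Hx; lra.
      * intros y _. apply ind_nonneg, pow_le, Cmod_ge_0.
    + right. unfold S_all. rewrite sumZ_lsum. reflexivity.
Qed.

Lemma T2_eq G M N t L :
  lsum (zr (- up (2 * M))%Z (up (2 * M))) (fun m => lsum (zr 0 (up (sqrt (2 * L))))
     (fun p => Defs.ind (cpP L p) (Defs.ind (cmP M m) (FF G (N / IZR p) t m) / IZR p ^ 2)))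
  = prime_sum L (fun p => S_flat G M (N / p) t / p ^ 2).
Proof.
  rewrite lsum_swap. unfold prime_sum. rewrite sumZ_lsum. apply lsum_ext. intros p _.
  cbv beta.
  rewrite (lsum_ext _ _ (fun m => (Defs.ind (cpP L p) 1 * / IZR p ^ 2) * Defs.ind (cmP M m) (FF G (N / IZR p) t m))).
  2:{ intros; rewrite (ind_mul (cpP L p)); unfold Rdiv; ring. }
  rewrite lsum_scal. unfold S_flat. rewrite sumZ_lsum.
  unfold cpP, cmP, FF, Rdiv. rewrite (ind_mul _ (_ * / _)). ring.
Qed.

Theorem lemma3p1 :
  exists C : R, 0 < C /\
  forall (G : R -> R), admissible_G G ->
  forall L0 : R,
    (forall L : R, L0 <= L -> prime_count L > sqrt L / (2 * ln L)) ->
  forall (L M N t : R), L0 <= L -> 0 < M -> 0 < N ->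
    S_flat G M N t <=
      C * (ln L / sqrt L) *
      (S_all G (M * L) N t + S_all G (2 * M * L) N t +
       prime_sum L (fun p => S_flat G M (N / p) t / p ^ 2)).
Proof.
  exists 16. split; [lra|].
  intros G HG L0 Hyp L M N t HL HM HN.
  destruct (Rle_lt_dec L 1) as [HL1|HL1].
  { exfalso. specialize (Hyp 1 ltac:(lra)). rewrite prime_count_1, sqrt_1, ln_1, Rmult_0_r in Hyp.
    unfold Rdiv in Hyp. rewrite Rinv_0, Rmult_0_r in Hyp. lra. }
  pose proof (Hyp L HL) as HK.
  assert (Hln : 0 < ln L) by (rewrite <- ln_1; apply ln_increasing; lra).
  assert (Hsq : 0 < sqrt L) by (apply sqrt_lt_R0; lra).
  set (K := prime_count L) in *.
  set (a := sqrt L / (2 * ln L)) in *.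
  assert (Ha : 0 < a) by (unfold a; apply Rdiv_lt_0_compat; lra).
  set (zrM := zr (- up (2 * M))%Z (up (2 * M))).
  set (zrP := zr 0 (up (sqrt (2 * L)))).
  set (PS := prime_sum L (fun p => S_flat G M (N / p) t / p ^ 2)).
  set (X := S_all G (M * L) N t + S_all G (2 * M * L) N t + PS).
  assert (HSf : forall N', 0 <= S_flat G M N' t).
  { intros N'. unfold S_flat. rewrite sumZ_lsum. apply lsum_nonneg. intros; apply ind_nonneg, pow_le, Cmod_ge_0. }
  assert (HSa : forall M', 0 <= S_all G M' N t).
  { intros M'. unfold S_all. rewrite sumZ_lsum. apply lsum_nonneg. intros; apply ind_nonneg, pow_le, Cmod_ge_0. }
  assert (HPS : 0 <= PS).
  { unfold PS, prime_sum. rewrite sumZ_lsum. apply lsum_nonneg. intros; apply ind_nonneg.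
    unfold Rdiv. apply Rmult_le_pos; auto. apply Rinv_nonneg, pow2_ge_0. }
  assert (HX : 0 <= X) by (unfold X; pose proof (HSa (M * L)); pose proof (HSa (2 * M * L)); lra).
  assert (Hclaim : K * S_flat G M N t <= 8 * X).
  { unfold S_flat. rewrite sumZ_lsum. fold zrM.
    rewrite <- lsum_scal.
    apply Rle_trans with (lsum zrM (fun m => lsum zrP (fun p =>
        8 * (Defs.ind (cmP M m /\ cpP L p) (FF G N t (m * (p * p))%Z) +
             Defs.ind (cpP L p) (Defs.ind (cmP M m) (FF G (N / IZR p) t m) / IZR p ^ 2))))).
    { apply lsum_le. intros m _. unfold K, prime_count, prime_sum. rewrite sumZ_lsum. fold zrP.
      rewrite Rmult_comm, <- lsum_scal. apply lsum_le. intros p _.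
      exact (pointwise G M N t L m p HG HN). }
    rewrite (lsum_ext zrM _ (fun m => 8 * (lsum zrP (fun p => Defs.ind (cmP M m /\ cpP L p) (FF G N t (m * (p * p))%Z))
        + lsum zrP (fun p => Defs.ind (cpP L p) (Defs.ind (cmP M m) (FF G (N / IZR p) t m) / IZR p ^ 2)))))
      by (intros; rewrite lsum_scal, lsum_plus; reflexivity).
    rewrite lsum_scal, lsum_plus. apply Rmult_le_compat_l; [lra|].
    unfold X. apply Rplus_le_compat.
    - apply T1_bound; lra.
    - right. apply T2_eq. }
  set (Sf := S_flat G M N t) in *.
  assert (HSf0 : 0 <= Sf) by apply HSf.
  assert (a * Sf <= 8 * X) by (apply Rle_trans with (K * Sf); [apply Rmult_le_compat_r; lra | auto]).
  set (c := 2 * ln L / sqrt L).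
  assert (Hc : 0 < c) by (unfold c; apply Rdiv_lt_0_compat; lra).
  assert (Hca : c * a = 1) by (unfold c, a; field; lra).
  replace Sf with (c * (a * Sf)) by (rewrite <- Rmult_assoc, Hca; ring).
  apply Rle_trans with (c * (8 * X)).
  - apply Rmult_le_compat_l; lra.
  - right. unfold c. field. lra.
Qed.
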